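(* Let $\bar V$ be a finite node set. Let $S_q,S'_q\in\mathbb R^{\bar V}$, $T_0>0$, $\epsilon_p>0$, $0<\eta\le1$, and let $p=\operatorname{softmax}(S_q/T_0)$, $p'=\operatorname{softmax}(S'_q/T_0)$, $a_v=(p_v+\epsilon_p)^\eta$, $a'_v=(p'_v+\epsilon_p)^\eta$. Let $u_q\in\mathbb R^d$, let $W_x$ be a $d\times d_x$ matrix, and let $x_v,x'_v\in\mathbb R^{d_x}$ for $v\in\bar V$. Define $h_v^{(0)}=a_vu_q+W_xx_v$ and $h_v'^{(0)}=a'_vu_q+W_xx'_v$. Then $$\max_{v\in\bar V}\|h^{(0)}_v-h'^{(0)}_v\|_2\le C_{\mathrm{init}}(\Delta_{\mathrm{seed}}+\Delta_X),\qquad C_{\mathrm{init}}=\frac{\eta\epsilon_p^{\eta-1}}{T_0}\|u_q\|_2+\|W_x\|_2,$$ where $\Delta_{\mathrm{seed}}=\|S_q-S'_q\|_\infty$ and $\Delta_X=\max_{v}\|x_v-x'_v\|_2$.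
   Context: $\|W_x\|_2$ is the spectral norm. In the paper the two primed/unprimed quantities come from two consecutive memory graphs aligned on a common node universe $\bar V$ (nodes absent from one graph are padded as isolated nodes), $S_q$ are query-conditioned entry scores, and $h^{(0)}$ are initial node representations of a graph reader. *)

(* Defs.v *)
From HB Require Import structures.
From mathcomp Require Import all_boot all_order all_algebra.
From mathcomp Require Import all_classical all_reals all_analysis.
Set Implicit Arguments. Unset Strict Implicit. Unset Printing Implicit Defensive.
Import Order.TTheory GRing.Theory Num.Theory.
Local Open Scope ring_scope.
Local Open Scope classical_set_scope.

Definition l2norm (R : realType) (n : nat) (v : 'cV[R]_n) : R :=
  Num.sqrt (\sum_(i < n) v i 0 ^+ 2).

Definition specnorm (R : realType) (m n : nat) (W : 'M[R]_(m, n)) : R :=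
  sup [set l2norm (W *m x) | x in [set x : 'cV[R]_n | l2norm x <= 1]].

(* maximum over a finite index set (0 on an empty set; all uses are of
   nonnegative quantities) *)
Definition fmax (R : realType) (V : finType) (f : V -> R) : R :=
  \big[Num.max/0]_(v : V) f v.

Definition softmax (R : realType) (V : finType) (s : V -> R) : V -> R :=
  fun v => expR (s v) / \sum_(w : V) expR (s w).

(* Main.v *)
Require Import Defs.
From HB Require Import structures.
From mathcomp Require Import all_boot all_order all_algebra.
From mathcomp Require Import all_classical all_reals all_analysis.
Import Order.TTheory GRing.Theory Num.Theory.
Local Open Scope ring_scope.
From mathcomp Require Import ring lra.
Set Implicit Arguments. Unset Strict Implicit.
Section H.
Variable R : realType.

Lemma cs_sq (I : finType) (a b : I -> R) :
  (\sum_i a i * b i) ^+ 2 <= (\sum_i a i ^+ 2) * (\sum_i b i ^+ 2).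
Proof.
set A := \sum_i a i ^+ 2; set B := \sum_i b i ^+ 2; set C := \sum_i a i * b i.
have B0 : 0 <= B by apply: sumr_ge0 => i _; apply: sqr_ge0.
have A0 : 0 <= A by apply: sumr_ge0 => i _; apply: sqr_ge0.
have [Bz|Bp] := eqVneq B 0.
  have bz : forall i, b i = 0.
    move=> i; apply/eqP; rewrite -sqrf_eq0; apply/eqP.
    by move/eqP: Bz; rewrite psumr_eq0 => [/allP/(_ i (mem_index_enum i))/implyP/(_ isT)/eqP|j _]; [|apply: sqr_ge0].
  rewrite /C (eq_bigr (fun _ => 0)) ?big1 // ?Bz; last by move=> i _; rewrite bz mulr0.
  by rewrite expr0n /= mulr0.
have Bpos : 0 < B by rewrite lt_def Bp B0.
have key : 0 <= \sum_i (B * a i - C * b i) ^+ 2 by apply: sumr_ge0 => i _; apply: sqr_ge0.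
have E : \sum_i (B * a i - C * b i) ^+ 2 = B * (A * B - C ^+ 2).
  rewrite (eq_bigr (fun i => B^+2 * a i ^+ 2 - (2 * B * C) * (a i * b i) + C ^+ 2 * b i ^+ 2)); last first.
    by move=> i _; ring.
  rewrite big_split /= sumrB -!mulr_sumr -/A -/B -/C; ring.
rewrite E in key.
have : 0 <= A * B - C ^+ 2 by rewrite -(pmulr_rge0 _ Bpos).
lra.
Qed.

Lemma sum_sq_ge0 (I : finType) (a : I -> R) : 0 <= \sum_i a i ^+ 2.
Proof. by apply: sumr_ge0 => i _; apply: sqr_ge0. Qed.

Lemma cs_sqrt (I : finType) (a b : I -> R) :
  \sum_i a i * b i <= Num.sqrt (\sum_i a i ^+ 2) * Num.sqrt (\sum_i b i ^+ 2).
Proof.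
rewrite -sqrtrM ?sum_sq_ge0 //.
apply: le_trans (ler_norm _) _.
rewrite -sqrtr_sqr; apply: ler_wsqrtr.
exact: cs_sq.
Qed.

Lemma l2norm_ge0 n (v : 'cV[R]_n) : 0 <= l2norm v.
Proof. exact: sqrtr_ge0. Qed.

Lemma l2normD n (u v : 'cV[R]_n) : l2norm (u + v) <= l2norm u + l2norm v.
Proof.
rewrite /l2norm.
set A := \sum_i u i 0 ^+ 2; set B := \sum_i v i 0 ^+ 2.
have -> : \sum_(i < n) (u + v) i 0 ^+ 2 = A + 2 * (\sum_i u i 0 * v i 0) + B.
  rewrite (eq_bigr (fun i => u i 0 ^+ 2 + 2 * (u i 0 * v i 0) + v i 0 ^+ 2)); last first.
    by move=> i _; rewrite mxE; ring.
  by rewrite !big_split /= -mulr_sumr.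
have h := cs_sqrt (fun i => u i 0) (fun i => v i 0).
rewrite -/A -/B in h.
have sA := sqrtr_ge0 A; have sB := sqrtr_ge0 B.
rewrite -[X in _ <= X]ger0_norm ?addr_ge0 // -sqrtr_sqr.
apply: ler_wsqrtr.
have eA : Num.sqrt A ^+ 2 = A by rewrite sqr_sqrtr // sum_sq_ge0.
have eB : Num.sqrt B ^+ 2 = B by rewrite sqr_sqrtr // sum_sq_ge0.
rewrite sqrrD eA eB; lra.
Qed.

Lemma l2normZ n (c : R) (v : 'cV[R]_n) : l2norm (c *: v) = `|c| * l2norm v.
Proof.
rewrite /l2norm (eq_bigr (fun i => c ^+ 2 * v i 0 ^+ 2)); last first.
  by move=> i _; rewrite mxE exprMn.
by rewrite -mulr_sumr sqrtrM ?sqr_ge0 // sqrtr_sqr.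
Qed.

End H.
Section H2.
Variable R : realType.

Lemma frob_bound m n (W : 'M[R]_(m, n)) (y : 'cV[R]_n) :
  l2norm (W *m y) <= Num.sqrt (\sum_i \sum_j W i j ^+ 2) * l2norm y.
Proof.
rewrite /l2norm -sqrtrM; last by apply: sumr_ge0 => i _; apply: sum_sq_ge0.
apply: ler_wsqrtr; rewrite mulr_suml; apply: ler_sum => i _.
rewrite mxE.
exact: (cs_sq (fun j => W i j) (fun j => y j 0)).
Qed.

Lemma specnorm_ge0 m n (W : 'M[R]_(m, n)) : 0 <= specnorm W.
Proof.
rewrite /specnorm.
have ub : has_ubound [set l2norm (W *m x) | x in [set x : 'cV[R]_n | l2norm x <= 1]].
  exists (Num.sqrt (\sum_i \sum_j W i j ^+ 2)) => _ [x /= hx <-].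
  apply: le_trans (frob_bound W x) _.
  by rewrite ler_piMr ?sqrtr_ge0.
apply: (ub_le_sup ub).
exists 0 => /=.
  by rewrite /l2norm (eq_bigr (fun _ => 0)) ?big1 ?sqrtr0 // => i _; rewrite mxE expr0n.
by rewrite mulmx0 /l2norm (eq_bigr (fun _ => 0)) ?big1 ?sqrtr0 // => i _; rewrite mxE expr0n.
Qed.

Lemma specnorm_bound m n (W : 'M[R]_(m, n)) (y : 'cV[R]_n) :
  l2norm (W *m y) <= specnorm W * l2norm y.
Proof.
have ub : has_ubound [set l2norm (W *m x) | x in [set x : 'cV[R]_n | l2norm x <= 1]].
  exists (Num.sqrt (\sum_i \sum_j W i j ^+ 2)) => _ [x /= hx <-].
  apply: le_trans (frob_bound W x) _.
  by rewrite ler_piMr ?sqrtr_ge0.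
have [y0|ypos] := eqVneq (l2norm y) 0.
  have := frob_bound W y; rewrite y0 !mulr0 => h.
  by apply: le_trans h _.
have yp : 0 < l2norm y by rewrite lt_def ypos l2norm_ge0.
set z := (l2norm y)^-1 *: y.
have hz : l2norm z <= 1.
  by rewrite /z l2normZ ger0_norm ?invr_ge0 ?l2norm_ge0 // mulVf.
have := ub_le_sup ub (ex_intro2 _ _ z hz erefl).
rewrite /z -scalemxAr l2normZ ger0_norm ?invr_ge0 ?l2norm_ge0 //.
rewrite -/(specnorm W) ler_pdivrMl //.
by rewrite mulrC.
Qed.

End H2.
Section H3.
Variable R : realType.

Lemma bern (t eta : R) : 0 <= t -> 0 < eta -> eta <= 1 ->
  powR t eta <= eta * t + (1 - eta).
Proof.
move=> t0 e0 e1.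
have [->|ne1] := eqVneq eta 1; first by rewrite powRr1 // mul1r subrr addr0.
have elt : eta < 1 by rewrite lt_def eq_sym ne1 e1.
have q0 : 0 < (1 - eta)^-1 by rewrite invr_gt0 subr_gt0.
have := @conjugate_powR R (powR t eta) 1 (eta^-1) ((1 - eta)^-1) (powR_ge0 _ _) ler01
  (eqbRL (invr_gt0 _) e0) q0.
rewrite !invrK => h.
have := h ltac:(by rewrite addrC subrK).
rewrite mulr1 powR1 -powRrM mulfV ?gt_eqF // powRr1 // => h2.
apply: le_trans h2 _. rewrite mul1r mulrC; lra.
Qed.

Lemma powR_lip (x y eps eta : R) : 0 < eps -> eps <= x -> x <= y ->
  0 < eta -> eta <= 1 ->
  powR y eta - powR x eta <= eta * powR eps (eta - 1) * (y - x).
Proof.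
move=> e0 ex xy h0 h1.
have x0 : 0 < x by apply: lt_le_trans ex.
set t := y / x.
have t0 : 0 <= t by rewrite divr_ge0 // ltW // (lt_le_trans x0 xy).
have yE : y = x * t by rewrite /t mulrC divfK ?gt_eqF.
have b := bern t0 h0 h1.
rewrite yE (powRM _ (ltW x0) t0).
have xpe : powR x eta = x * powR x (eta - 1) by rewrite mulr_powRB1 ?ltW.
rewrite xpe.
have hpow : powR x (eta - 1) <= powR eps (eta - 1).
  have E a : powR a (eta - 1) = (powR a (1 - eta))^-1 by rewrite -powRN opprB.
  rewrite !E lef_pV2 ?posrE ?powR_gt0 //.
  apply: ge0_ler_powR => //; rewrite ?nnegrE ?subr_ge0 // ltW //.
have pxg := powR_ge0 x (eta - 1).
have tm : 0 <= t - 1.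
  by rewrite subr_ge0 /t ler_pdivlMr // mul1r.
set P := powR x (eta - 1); set Pe := powR eps (eta - 1); set Pt := powR t eta.
have xP : 0 <= x * P by apply: mulr_ge0 => //; apply: ltW.
have h2 : x * P * (Pt - 1) <= x * P * (eta * (t - 1)).
  apply: ler_wpM2l; first exact: xP. have -> : eta * (t - 1) = eta * t - eta by ring. rewrite /Pt; lra.
have h3 : P * (x * eta * (t - 1)) <= Pe * (x * eta * (t - 1)).
  by apply: ler_wpM2r => //; rewrite mulr_ge0 // mulr_ge0 ?ltW.
have e1 : x * P * (eta * (t - 1)) = P * (x * eta * (t - 1)) by ring.
have e2 : eta * Pe * (x * t - x) = Pe * (x * eta * (t - 1)) by ring.
have e3 : x * P * Pt - x * P = x * P * (Pt - 1) by ring.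
nra.
Qed.

Lemma powR_lip_abs (x y eps eta : R) : 0 < eps -> eps <= x -> eps <= y ->
  0 < eta -> eta <= 1 ->
  `|powR x eta - powR y eta| <= eta * powR eps (eta - 1) * `|x - y|.
Proof.
move=> e0 ex ey h0 h1.
have mono : forall a b, eps <= a -> a <= b -> powR a eta <= powR b eta.
  move=> a b ea ab; apply: ge0_ler_powR => //; first exact: ltW.
    by rewrite nnegrE; apply: le_trans (ltW e0) ea.
  by rewrite nnegrE; apply: le_trans (ltW e0) (le_trans ea ab).
have [xy|yx] := leP x y.
  rewrite distrC (distrC x) !ger0_norm ?subr_ge0 ?mono //.
  exact: powR_lip.
have yx' := ltW yx; rewrite !ger0_norm ?subr_ge0 ?mono //.
exact: (powR_lip e0 ey yx' h0 h1).
Qed.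

End H3.
Section H4.
Variable R : realType.

Lemma key_ineq (e r e' r' F D : R) : 0 < e -> 0 <= r -> 0 < e' -> 0 <= r' ->
  1 <= F -> 0 <= D -> e' <= F * e -> r <= F * r' -> F * (1 - D) <= 1 ->
  e' / (e' + r') - e / (e + r) <= D.
Proof.
move=> e0 r0 e'0 r'0 F1 D0 he hr hF.
set G := F * F.
have A0 : 0 < G * e + r by rewrite ltr_pwDl // mulr_gt0 // mulr_gt0 // (lt_le_trans ltr01 F1).
have B0 : 0 < e + r by rewrite ltr_pwDl.
have C0 : 0 < e' + r' by rewrite ltr_pwDl.
have h1 : e' / (e' + r') <= G * e / (G * e + r).
  rewrite ler_pdivrMr // mulrAC ler_pdivlMr //.
  have : e' * r <= G * e * r'.
    have : e' * r <= F * e * r by apply: ler_wpM2r.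
    have F0 : 0 <= F by apply: le_trans F1.
    have : F * e * r <= F * e * (F * r') by apply: ler_wpM2l => //; rewrite mulr_ge0 // ltW.
    rewrite /G; lra.
  move=> h; rewrite /G in h *; nra.
have h2 : G * e / (G * e + r) - e / (e + r) <= D.
  rewrite -(ler_pM2r (mulr_gt0 A0 B0)).
  have -> : (G * e / (G * e + r) - e / (e + r)) * ((G * e + r) * (e + r)) = e * r * (G - 1).
    rewrite /G; field; apply/andP; split; apply: lt0r_neq0 => //.
  have hF2 : F - 1 <= D * (F + 1) by nra.
  have er : 0 <= e * r by apply: mulr_ge0 => //; apply: ltW.
  have h3 : e * r * (G - 1) <= e * r * (D * (F + 1) * (F + 1)).
    apply: ler_wpM2l => //; rewrite /G.
    have : (F - 1) * (F + 1) <= D * (F + 1) * (F + 1).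
      by apply: ler_wpM2r => //; lra.
    move=> h; apply: le_trans h; lra.
  apply: le_trans h3 _.
  have h4 : e * r * ((F + 1) * (F + 1)) <= (G * e + r) * (e + r).
    rewrite /G; have := sqr_ge0 (F * e - r); rewrite expr2 => sq; nra.
  have := ler_wpM2l D0 h4. move=> h5.
  apply: le_trans h5; lra.
lra.
Qed.

Lemma softmax_lip1 (V : finType) (s s' : V -> R) (D : R) :
  (forall w, `|s w - s' w| <= D) -> forall v, softmax s' v - softmax s v <= D.
Proof.
move=> hD v.
have D0 : 0 <= D by apply: le_trans (hD v).
rewrite /softmax (bigD1 v) //= [X in _ - _ / X](bigD1 v) //=.
set F := expR D.
apply: (@key_ineq _ _ _ _ F) => //.
- exact: expR_gt0.
- by apply: sumr_ge0 => w _; apply: expR_ge0.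
- exact: expR_gt0.
- by apply: sumr_ge0 => w _; apply: expR_ge0.
- by rewrite /F -expR0 ler_expR.
- rewrite /F -expRD ler_expR.
  have := hD v; rewrite ler_norml; lra.
- rewrite mulr_sumr; apply: ler_sum => w _.
  rewrite /F -expRD ler_expR.
  have := hD w; rewrite ler_norml; lra.
- have h := expR_ge1Dx (- D).
  rewrite expRN in h.
  have Fp : 0 < F by apply: expR_gt0.
  have : F * (1 - D) <= F * F^-1 by apply: ler_wpM2l; [exact: ltW | lra].
  by rewrite mulfV ?gt_eqF.
Qed.

Lemma softmax_lip (V : finType) (s s' : V -> R) (D : R) :
  (forall w, `|s w - s' w| <= D) -> forall v, `|softmax s v - softmax s' v| <= D.
Proof.
move=> hD v; rewrite ler_norml; apply/andP; split.
  rewrite lerNl opprB; exact: softmax_lip1.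
apply: softmax_lip1 => w; rewrite distrC; exact: hD.
Qed.

End H4.

Section Fm.
Variable R : realType.
Variable V : finType.

Lemma fmax_le (f : V -> R) c : 0 <= c -> (forall v, f v <= c) -> fmax f <= c.
Proof.
move=> c0 h; rewrite /fmax; apply: (big_ind (fun y => y <= c)) => //.
by move=> y z hy hz; rewrite ge_max hy hz.
Qed.

Lemma le_fmax (f : V -> R) v : f v <= fmax f.
Proof. by rewrite /fmax (bigD1 v) //= le_max lexx. Qed.

Lemma fmax_ge0 (f : V -> R) : 0 <= fmax f.
Proof.
rewrite /fmax; elim/big_rec: _ => //.
by move=> i y _ hy; rewrite le_max hy orbT.
Qed.

End Fm.

Theorem lemma4p9 (R : realType) (V : finType) (d dx : nat)
  (Sq Sq' : V -> R) (T0 epsp eta : R)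
  (hT0 : 0 < T0) (heps : 0 < epsp) (heta0 : 0 < eta) (heta1 : eta <= 1)
  (uq : 'cV[R]_d) (Wx : 'M[R]_(d, dx)) (x x' : V -> 'cV[R]_dx) :
  let p := softmax (fun v => Sq v / T0) in
  let p' := softmax (fun v => Sq' v / T0) in
  let a := fun v => powR (p v + epsp) eta in
  let a' := fun v => powR (p' v + epsp) eta in
  let h0 := fun v => a v *: uq + Wx *m x v in
  let h0' := fun v => a' v *: uq + Wx *m x' v in
  let Cinit := eta * powR epsp (eta - 1) / T0 * l2norm uq + specnorm Wx in
  let Dseed := fmax (fun v => `|Sq v - Sq' v|) in
  let DX := fmax (fun v => l2norm (x v - x' v)) in
  fmax (fun v => l2norm (h0 v - h0' v)) <= Cinit * (Dseed + DX).
Proof.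
pose p := softmax (fun v => Sq v / T0).
pose p' := softmax (fun v => Sq' v / T0).
pose a := fun v => powR (p v + epsp) eta.
pose a' := fun v => powR (p' v + epsp) eta.
pose h0 := fun v => a v *: uq + Wx *m x v.
pose h0' := fun v => a' v *: uq + Wx *m x' v.
pose Cinit := eta * powR epsp (eta - 1) / T0 * l2norm uq + specnorm Wx.
pose Dseed := fmax (fun v => `|Sq v - Sq' v|).
pose DX := fmax (fun v => l2norm (x v - x' v)).
change (fmax (fun v => l2norm (h0 v - h0' v)) <= Cinit * (Dseed + DX)).
set K := eta * powR epsp (eta - 1).
have K0 : 0 <= K by apply: mulr_ge0; [exact: ltW | exact: powR_ge0].
have Ds0 : 0 <= Dseed by apply: fmax_ge0.
have DX0 : 0 <= DX by apply: fmax_ge0.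
have sW0 : 0 <= specnorm Wx by apply: specnorm_ge0.
have u0 : 0 <= l2norm uq by apply: l2norm_ge0.
set c1 := K / T0 * l2norm uq.
have c10 : 0 <= c1 by apply: mulr_ge0 => //; apply: divr_ge0 => //; exact: ltW.
have CE : Cinit = c1 + specnorm Wx by [].
apply: fmax_le; first by rewrite CE; apply: mulr_ge0; apply: addr_ge0.
move=> v.
have hp : `|p v - p' v| <= Dseed / T0.
  apply: softmax_lip => w.
  have iT : 0 <= T0^-1 by rewrite invr_ge0; exact: ltW.
  rewrite -mulrBl normrM (ger0_norm iT).
  apply: ler_wpM2r => //.
  exact: (le_fmax (fun v => `|Sq v - Sq' v|) w).
have pge0 : forall (s : V -> R) w, 0 <= softmax s w.
  move=> s w; rewrite /softmax divr_ge0 ?expR_ge0 //.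
  by apply: sumr_ge0 => i _; apply: expR_ge0.
have ha : `|a v - a' v| <= K * (Dseed / T0).
  apply: le_trans (powR_lip_abs heps _ _ heta0 heta1) _.
  - have hh : 0 <= p v by exact: pge0.
    lra.
  - have hh : 0 <= p' v by exact: pge0.
    lra.
  rewrite -/K; apply: ler_wpM2l => //.
  by rewrite opprD addrACA subrr addr0.
have hx : l2norm (x v - x' v) <= DX := le_fmax (fun v => l2norm (x v - x' v)) v.
have E : h0 v - h0' v = (a v - a' v) *: uq + Wx *m (x v - x' v).
  by rewrite /h0 /h0' mulmxBr scalerBl opprD addrACA.
rewrite E.
apply: le_trans (l2normD _ _) _.
rewrite l2normZ.
have t1 : `|a v - a' v| * l2norm uq <= c1 * Dseed.
  have -> : c1 * Dseed = K * (Dseed / T0) * l2norm uq by rewrite /c1; field; rewrite gt_eqF.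
  by apply: ler_wpM2r.
have t2 : l2norm (Wx *m (x v - x' v)) <= specnorm Wx * DX.
  apply: le_trans (specnorm_bound _ _) _.
  by apply: ler_wpM2l.
rewrite CE.
have : 0 <= c1 * DX by apply: mulr_ge0.
have : 0 <= specnorm Wx * Dseed by apply: mulr_ge0.
move=> q1 q2.
have -> : (c1 + specnorm Wx) * (Dseed + DX) = c1 * Dseed + specnorm Wx * DX + (c1 * DX + specnorm Wx * Dseed) by ring.
lra.
Qed.
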